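(* Let $A_S$ be an Artin group associated to a Coxeter matrix over a finite set $S$. Then $A_S$ is parabolic-retractable if and only if, for every $X\subseteq S$ and every $x\in X$, the subgroup $A_X$ admits a retraction onto $A_{X\setminus\{x\}}$.
   Context: A Coxeter matrix over a finite set $S$ is a matrix $M=(m_{s,t})_{s,t\in S}$ with entries in $\mathbb{N}\cup\{\infty\}$, $m_{s,s}=1$, and $m_{s,t}=m_{t,s}\ge 2$ for $s\neq t$. Write $\Pi(s,t,m)$ for the alternating word $sts\cdots$ of length $m$. The Artin group is $A_S=\langle S\mid \Pi(s,t,m_{s,t})=\Pi(t,s,m_{s,t})$ for $s\neq t$, $m_{s,t}\neq\infty\rangle$. For $X\subseteq S$, $A_X$ is the subgroup generated by $X$ ($A_\emptyset$ is trivial). A retraction of $G$ onto a subgroup $H$ is a homomorphism $\varphi:G\to H$ with $\varphi|_H=\mathrm{id}_H$. $A_S$ is parabolic-retractable if it admits a retraction onto $A_X$ for every $X\subseteq S$. *)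

(* Defs.v *)
(* Artin groups are encoded by words over signed generators
   modulo the congruence generated by free cancellation and the Artin relations. *)
From mathcomp Require Import all_boot.
Set Implicit Arguments. Unset Strict Implicit. Unset Printing Implicit Defensive.

Section Artin.
Variable S : finType.

(* Coxeter matrix: entries in nat ∪ {∞}; None encodes ∞. *)
Definition coxeter_matrix (M : S -> S -> option nat) : Prop :=
  (forall s, M s s = Some 1) /\
  (forall s t, M s t = M t s) /\
  (forall s t, s != t -> forall m, M s t = Some m -> 2 <= m).

(* A letter (s, b): s if b = false, s^-1 if b = true. *)
Definition letter := (S * bool)%type.
Definition word := seq letter.
Definition inv_letter (a : letter) : letter := (a.1, ~~ a.2).

Definition Pi (s t : S) (m : nat) : word :=
  mkseq (fun i => (if odd i then t else s, false)) m.

Variable M : S -> S -> option nat.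

Inductive art_eq : word -> word -> Prop :=
  | art_refl w : art_eq w w
  | art_sym u v : art_eq u v -> art_eq v u
  | art_trans u v w : art_eq u v -> art_eq v w -> art_eq u w
  | art_cancel u v a : art_eq (u ++ [:: a; inv_letter a] ++ v) (u ++ v)
  | art_rel u v s t m : s != t -> M s t = Some m ->
      art_eq (u ++ Pi s t m ++ v) (u ++ Pi t s m ++ v).

Definition in_parabolic (X : {set S}) (w : word) : Prop :=
  exists w', art_eq w w' /\ all (fun a : letter => a.1 \in X) w'.

(* A retraction of A_X onto A_Y: a group homomorphism A_X -> A_Y which is the
   identity on A_Y, represented by a function on representative words. *)
Definition retraction (X Y : {set S}) : Prop :=
  exists f : word -> word,
    [/\ (forall w1 w2, in_parabolic X w1 -> in_parabolic X w2 ->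
           art_eq w1 w2 -> art_eq (f w1) (f w2)),
        (forall w1 w2, in_parabolic X w1 -> in_parabolic X w2 ->
           art_eq (f (w1 ++ w2)) (f w1 ++ f w2)),
        (forall w, in_parabolic X w -> in_parabolic Y (f w)) &
        (forall w, in_parabolic Y w -> art_eq (f w) w)].

Definition parabolic_retractable : Prop :=
  forall X : {set S}, retraction [set: S] X.

End Artin.

(* Main.v *)
Require Import Defs.
From mathcomp Require Import all_boot.

Section L.
Variable S : finType.
Variable M : S -> S -> option nat.

Lemma art_ctx (p q u u' : word S) : art_eq M u u' -> art_eq M (p ++ u ++ q) (p ++ u' ++ q).
Proof.
elim=> {u u'}.
- move=> w; exact: art_refl.
- move=> u v _ IH; exact: art_sym.
- move=> u v w _ IH1 _ IH2; exact: art_trans IH1 IH2.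
- move=> u v a.
  have -> : p ++ (u ++ [:: a; inv_letter a] ++ v) ++ q = (p ++ u) ++ [:: a; inv_letter a] ++ (v ++ q)
    by rewrite !catA.
  have -> : p ++ (u ++ v) ++ q = (p ++ u) ++ (v ++ q) by rewrite !catA.
  exact: art_cancel.
- move=> u v s t m st Hm.
  have -> : p ++ (u ++ Pi s t m ++ v) ++ q = (p ++ u) ++ Pi s t m ++ (v ++ q) by rewrite !catA.
  have -> : p ++ (u ++ Pi t s m ++ v) ++ q = (p ++ u) ++ Pi t s m ++ (v ++ q) by rewrite !catA.
  exact: art_rel.
Qed.

Lemma art_cat (u u' v v' : word S) : art_eq M u u' -> art_eq M v v' ->
  art_eq M (u ++ v) (u' ++ v').
Proof.
move=> H1 H2; apply: (art_trans (v := u' ++ v)).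
  by have := @art_ctx [::] v _ _ H1; rewrite /= .
by move: (@art_ctx u' [::] _ _ H2); rewrite !cats0.
Qed.

Lemma inpar_cat (X : {set S}) (w1 w2 : word S) : in_parabolic M X w1 -> in_parabolic M X w2 ->
  in_parabolic M X (w1 ++ w2).
Proof.
case=> [a [Ha Aa]] [b [Hb Ab]]; exists (a ++ b); split; first exact: art_cat.
by rewrite all_cat Aa Ab.
Qed.

Lemma inpar_sub (X Y : {set S}) (w : word S) : X \subset Y -> in_parabolic M X w -> in_parabolic M Y w.
Proof.
move=> sXY [a [Ha Aa]]; exists a; split=> //.
apply/allP => l /(allP Aa) lX; exact: (subsetP sXY).
Qed.

Lemma inpar_T (w : word S) : in_parabolic M [set: S] w.
Proof. exists w; split; first exact: art_refl. by apply/allP => l _; rewrite inE. Qed.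

Lemma retr_id (Z : {set S}) : retraction M Z Z.
Proof.
exists id; split=> //.
- move=> *; exact: art_refl.
- move=> *; exact: art_refl.
Qed.

Lemma retr_comp (Z Z' Y : {set S}) : Y \subset Z' -> Z' \subset Z -> retraction M Z Z' -> retraction M Z' Y ->
  retraction M Z Y.
Proof.
move=> sYZ sZZ [f [f1 f2 f3 f4]] [g [g1 g2 g3 g4]].
exists (fun w => g (f w)); split.
- move=> w1 w2 H1 H2 H; apply: g1; auto.
- move=> w1 w2 H1 H2.
  apply: (art_trans (v := g (f w1 ++ f w2))).
    apply: g1; [apply: f3; exact: inpar_cat | apply: inpar_cat; auto | auto].
  apply: g2; auto.
- move=> w H; auto.
- move=> w H.
  have HZ' := @inpar_sub _ _ w sYZ H.
  apply: (art_trans (v := g w)); last exact: g4.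
  apply: g1 => //; first exact: f3 (@inpar_sub _ _ w sZZ HZ').
  exact: f4.
Qed.
End L.

Lemma retr_chain (S : finType) (M : S -> S -> option nat) :
  (forall (X : {set S}) (x : S), x \in X -> retraction M X (X :\ x)) ->
  forall n (Z Y : {set S}), Y \subset Z -> #|Z :\: Y| = n -> retraction M Z Y.
Proof.
move=> H; elim=> [|n IH] Z Y sYZ hc.
  have -> : Y = Z.
    apply/eqP; rewrite eqEsubset sYZ /=.
    by move/eqP: hc; rewrite cards_eq0 setD_eq0.
  exact: retr_id.
have : 0 < #|Z :\: Y| by rewrite hc.
case/card_gt0P => x xZY.
move: (xZY); rewrite inE => /andP [xY xZ].
apply: (@retr_comp _ _ Z (Z :\ x) Y).
- apply/subsetP => y yY; rewrite !inE (subsetP sYZ _ yY) andbT.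
  by apply/eqP => e; rewrite -e yY in xY.
- exact: subsetDl.
- exact: H.
- apply: (IH _ _) .
  + apply/subsetP => y yY; rewrite !inE (subsetP sYZ _ yY) andbT.
    by apply/eqP => e; rewrite -e yY in xY.
  + move: hc; rewrite (cardsD1 x) xZY add1n => -[<-].
    apply: eq_card => y; rewrite !inE.
    by case: (y == x); case: (y \in Y); case: (y \in Z).
Qed.

Theorem lemma3p1 (S : finType) (M : S -> S -> option nat) :
  coxeter_matrix M ->
  (parabolic_retractable M <->
   forall (X : {set S}) (x : S), x \in X -> retraction M X (X :\ x)).
Proof.
move=> _; split.
- move=> H X x xX; case: (H (X :\ x)) => f [f1 f2 f3 f4].
  exists f; split.
  + move=> w1 w2 _ _; apply: f1; exact: inpar_T.
  + move=> w1 w2 _ _; apply: f2; exact: inpar_T.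
  + move=> w _; apply: f3; exact: inpar_T.
  + exact: f4.
- move=> H X; apply: (@retr_chain S M H #|[set: S] :\: X| [set: S] X) => //.
Qed.
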